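(* Let $\mathcal{S}$ be a finite state space with non-terminal states $\mathcal{S}_N$, let $r:\mathcal{S}\to\mathbb{R}$ satisfy $r(s)<0$ for all $s\in\mathcal{S}_N$, let $\lambda>0$, and let $\mathbf{P}^{\pi_d}$ be the state-transition matrix of the default policy $\pi_d$, with rows of non-terminal states summing to $1$ and rows of terminal states equal to zero. Let $\mathbf{Z}=\big[\operatorname{diag}(\exp(-\mathbf{r}/\lambda))-\mathbf{P}^{\pi_d}\big]^{-1}$ and $\operatorname{Sym}(\mathbf{Z})=(\mathbf{Z}+\mathbf{Z}^\top)/2$. Assume there is exactly one start state $s_0$ and that every state is reachable from $s_0$ under the default policy, i.e. for every $s\in\mathcal{S}$ there is a finite sequence of states $s_0=u_0,u_1,\dots,u_k=s$ with $\prod_{t=0}^{k-1}\mathbf{P}^{\pi_d}(u_t,u_{t+1})>0$. Then the largest eigenvalue of $\operatorname{Sym}(\mathbf{Z})$ is positive and its corresponding (top) eigenvector can be chosen with all entries positive.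
   Context: $\mathbf{P}^{\pi_d}(s,s')$ is the probability of transitioning from $s$ to $s'$ under the default policy $\pi_d$, which assigns nonzero probability to all state-action pairs; $\exp$ acts entrywise. $\mathbf{Z}$ is the default representation (DR). *)

(* Defs.v *)
From HB Require Import structures.
From mathcomp Require Import all_boot all_order all_algebra.
From mathcomp Require Import all_classical all_reals all_analysis.
Set Implicit Arguments. Unset Strict Implicit. Unset Printing Implicit Defensive.
Import Order.TTheory GRing.Theory Num.Theory.
Local Open Scope ring_scope.

Definition default_rep (R : realType) (n : nat) (r : 'I_n -> R) (lambda : R)
  (P : 'M[R]_n) : 'M[R]_n :=
  invmx (diag_mx (\row_i expR (- r i / lambda)) - P).

Definition symm_part (R : realType) (n : nat) (A : 'M[R]_n) : 'M[R]_n :=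
  2^-1 *: (A + A^T).

Definition reachable (R : realType) (n : nat) (P : 'M[R]_n) (s0 s : 'I_n) : Prop :=
  exists (k : nat) (u : nat -> 'I_n),
    u 0%N = s0 /\ u k = s /\ 0 < \prod_(t < k) P (u t) (u t.+1).

(* Main.v *)
Require Import Defs.
From HB Require Import structures.
From mathcomp Require Import all_boot all_order all_algebra.
From mathcomp Require Import all_classical all_reals all_analysis.
From mathcomp Require Import lra ring.
Import Order.TTheory GRing.Theory Num.Theory.
Local Open Scope ring_scope.

Set Implicit Arguments. Unset Strict Implicit. Unset Printing Implicit Defensive.
Section QF.
Variables (R : realType) (n : nat).
Implicit Types (A : 'M[R]_n) (x y z : 'rV[R]_n).

Lemma mul_self_ge0 (a : R) : 0 <= a * a.
Proof. by rewrite -expr2 sqr_ge0. Qed.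

Definition qf A x y : R := (x *m A *m y^T) 0 0.

Lemma qfE A x y : qf A x y = \sum_i \sum_j x 0 i * A i j * y 0 j.
Proof.
rewrite /qf mxE exchange_big /=; apply: eq_bigr => j _.
rewrite !mxE big_distrl /=; apply: eq_bigr => i _; by rewrite ?mxE.
Qed.

Lemma qf1E x y : qf 1 x y = \sum_i x 0 i * y 0 i.
Proof. by rewrite /qf mulmx1 mxE; apply: eq_bigr => i _; rewrite mxE. Qed.

Lemma qfC A x y : qf A x y = qf A^T y x.
Proof.
rewrite /qf -[in LHS](trmxK (x *m A *m y^T)) [in LHS]mxE.
by rewrite !trmx_mul trmxK mulmxA.
Qed.

Lemma qfDl A x y z : qf A (x + y) z = qf A x z + qf A y z.
Proof. by rewrite /qf !mulmxDl mxE. Qed.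

Lemma qfZl A a x z : qf A (a *: x) z = a * qf A x z.
Proof. by rewrite /qf -!scalemxAl mxE. Qed.

Lemma qfDr A x y z : qf A z (x + y) = qf A z x + qf A z y.
Proof. by rewrite qfC qfDl -!qfC. Qed.

Lemma qfZr A a x z : qf A z (a *: x) = a * qf A z x.
Proof. by rewrite qfC qfZl -!qfC. Qed.

Lemma nn_ge0 x : 0 <= qf 1 x x.
Proof. rewrite qf1E; apply: sumr_ge0 => i _; exact: mul_self_ge0. Qed.

Lemma nn_eq0 x : qf 1 x x = 0 -> x = 0.
Proof.
rewrite qf1E => /psumr_eq0P H.
apply/rowP => i; rewrite mxE.
have /eqP := H (fun i _ => mul_self_ge0 _) i isT. by rewrite mulf_eq0 orbb => /eqP.
Qed.

Lemma nn_gt0 x : x != 0 -> 0 < qf 1 x x.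
Proof.
move=> x0; rewrite lt_neqAle nn_ge0 andbT eq_sym.
by apply/eqP => /nn_eq0 /eqP; rewrite (negPf x0).
Qed.

End QF.

Import numFieldNormedType.Exports.
Lemma cont_sum (R : realType) (T : topologicalType) (I : finType) (f : I -> T -> R) :
  (forall i, continuous (f i)) -> continuous (fun x => \sum_i f i x).
Proof.
move=> fc; suff H : forall r, continuous (fun x => \sum_(i <- r) f i x) by exact: H.
elim => [|a r IH].
  under eq_fun do rewrite big_nil. exact: cst_continuous.
under eq_fun do rewrite big_cons.
by move=> x; apply: (continuousD (fc a x) (IH x)).
Qed.

Lemma qf_cont (R : realType) n (A : 'M[R]_n) : continuous (fun x => qf A x x).
Proof.
under eq_fun do rewrite qfE.
apply: cont_sum => i; apply: cont_sum => j.
move=> x; apply: (continuousM (s:=fun x : 'rV[R]_n => x 0 i * A i j) (t:=fun x => x 0 j)); last exact: coord_continuous.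
apply: (continuousM (s:=fun x : 'rV[R]_n => x 0 i) (t:=fun=> A i j)); first exact: coord_continuous.
exact: cst_continuous.
Qed.

Lemma sphere_max (R : realType) n (A : 'M[R]_n) (s0 : 'I_n) :
  exists2 c : 'rV[R]_n, qf 1 c c = 1 & forall t, qf 1 t t = 1 -> qf A t t <= qf A c c.
Proof.
pose Sp := [set x : 'rV[R]_n | qf 1 x x = 1]%classic.
have Sp0 : (Sp !=set0)%classic.
  exists (\row_i (i == s0)%:R); rewrite /Sp /= qf1E (bigD1 s0) //= big1.
    by rewrite !mxE eqxx mulr1 addr0.
  by move=> i /negPf H; rewrite !mxE H mulr0.
have cSp : compact Sp.
  apply: (@subclosed_compact _ Sp [set v : 'rV[R]_n | forall i, `[-1, 1]%classic (v ord0 i)]%classic).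
  - apply: (@preimage_closed _ R (fun x : 'rV[R]_n => qf 1 x x) [set y : R | y = 1]%classic); last exact: closed_eq.
    by move=> x _; exact: qf_cont.
  - exact: (@rV_compact R n (fun _ => `[-1, 1]%classic) (fun _ => @segment_compact _ _ _)).
  - move=> x /= Hx i.
    have : x 0 i * x 0 i <= 1.
      rewrite -Hx qf1E (bigD1 i) //= lerDl; apply: sumr_ge0 => j _; exact: mul_self_ge0.
    move=> H; rewrite /= in_itv /=; apply/andP; split; nra.
have [c cS cmax] := EVT_max_rV Sp0 cSp (continuous_subspaceT (@qf_cont R n A)).
exists c; first by move: cS; rewrite inE.
by move=> t Ht; apply: cmax; rewrite inE.
Qed.

Unset Implicit Arguments.
Lemma PF (R : realType) n (S : 'M[R]_n) (s0 : 'I_n) :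
  S^T = S -> (forall i j, 0 <= S i j) -> (forall i, 0 < S s0 i) ->
  exists (mu : R) (v : 'rV[R]_n), eigenvalue S mu /\
    (forall mu', eigenvalue S mu' -> mu' <= mu) /\ 0 < mu /\
    v *m S = mu *: v /\ (forall i, 0 < v 0 i).
Proof.
move=> Ssym Sge0 Spos.
have [c c1 cmax] := sphere_max S s0.
set Mx := qf S c c.
have C1 : forall x, qf S x x <= Mx * qf 1 x x.
  move=> x; have [/nn_eq0 ->|xn] := eqVneq (qf 1 x x) 0.
    by rewrite /qf !mul0mx mxE mulr0.
  have Np : 0 < qf 1 x x by rewrite lt_neqAle eq_sym xn nn_ge0.
  pose s := Num.sqrt (qf 1 x x).
  have sp : 0 < s by rewrite sqrtr_gt0.
  have ss : s * s = qf 1 x x by rewrite -expr2 sqr_sqrtr // ltW.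
  have y1 : qf 1 (s^-1 *: x) (s^-1 *: x) = 1.
    by rewrite qfZl qfZr mulrA -ss; field; rewrite gt_eqF.
  have := cmax _ y1; rewrite qfZl qfZr mulrA -/Mx => H.
  rewrite -ss.
  have -> : qf S x x = (s * s) * (s^-1 * s^-1 * qf S x x) by field; rewrite gt_eqF.
  rewrite [Mx * _]mulrC; apply: ler_wpM2l => //; nra.
have symS : forall x z, qf S z x = qf S x z by move=> x z; rewrite qfC Ssym.
have sym1 : forall x z : 'rV[R]_n, qf 1 z x = qf 1 x z.
  by move=> x z; rewrite !qf1E; apply: eq_bigr => i _; rewrite mulrC.
have C2 : forall y, qf S y y = Mx * qf 1 y y -> y *m S = Mx *: y.
  move=> y Hy; pose g := y *m S - Mx *: y.
  have key : qf S y g - Mx * qf 1 y g = qf 1 g g.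
    have e : g = y *m S + (- Mx) *: y by rewrite /g scaleNr.
    have key' : qf 1 g g = qf S y g + (- Mx) * qf 1 y g.
      by rewrite {1}e qfDl qfZl; congr (_ + _); rewrite /qf mulmx1.
    by rewrite key' mulNr.
  have expand : forall (A : 'M[R]_n), (forall x z, qf A z x = qf A x z) -> forall h t,
      qf A (y + t *: h) (y + t *: h) = qf A y y + 2 * t * qf A y h + t * t * qf A h h.
    move=> A sA h t; rewrite !qfDl !qfDr !qfZl !qfZr (sA y h); ring.
  have H1 : forall t, 2 * t * qf 1 g g + t * t * (qf S g g - Mx * qf 1 g g) <= 0.
    move=> t; have := C1 (y + t *: g); rewrite (expand S symS) (expand 1 sym1) Hy -key.
    move=> H; nra.
  have C1g := C1 g.
  have N0 : qf 1 g g = 0.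
    apply/eqP; rewrite eq_le nn_ge0 andbT leNgt; apply/negP => Np.
    move: H1 C1g Np; set N := qf 1 g g; set q := qf S g g => H1 C1g Np.
    pose c' : R := Mx * N - q.
    have c0 : 0 <= c' by rewrite subr_ge0.
    pose t : R := N / (c' + 1).
    have tp : 0 < t by rewrite divr_gt0 // ltr_wpDl.
    have tE : t * c' + t = N by rewrite /t; field; rewrite gt_eqF // ltr_wpDl.
    have H := H1 t.
    have : t * (2 * N) <= t * (t * c') by rewrite /c'; nra.
    rewrite ler_pM2l // => H'.
    have Hb : t * c' = N - t by rewrite -tE addrK.
    rewrite Hb in H'.
    clear -H' Np tp; lra.
  by apply/eqP; rewrite -subr_eq0; apply/eqP; exact: (nn_eq0 N0).
have [w [w1 qw wge0]] : exists w : 'rV[R]_n,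
    [/\ qf 1 w w = 1, qf S w w = Mx & forall i, 0 <= w 0 i].
  exists (\row_i `|c 0 i|); split.
  - rewrite -c1 !qf1E; apply: eq_bigr => i _.
    by rewrite !mxE -normrM ger0_norm // mul_self_ge0.
  - apply/eqP; rewrite eq_le; apply/andP; split.
      apply: cmax; rewrite -c1 !qf1E; apply: eq_bigr => i _.
      by rewrite !mxE -normrM ger0_norm // mul_self_ge0.
    rewrite /Mx !qfE; apply: ler_sum => i _; apply: ler_sum => j _; rewrite !mxE.
    have -> : `|c 0 i| * S i j * `|c 0 j| = `|c 0 i * S i j * c 0 j|.
      by rewrite !normrM (ger0_norm (Sge0 i j)).
    exact: ler_norm.
  - by move=> i; rewrite mxE normr_ge0.
have weig : w *m S = Mx *: w by apply: C2; rewrite qw w1 mulr1.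
have weigi : forall i, Mx * w 0 i = \sum_j w 0 j * S j i.
  by move=> i; move: (congr1 (fun m : 'rV[R]_n => m 0 i) weig); rewrite [in RHS]mxE mxE => <-.
have wn0 : w != 0.
  apply/eqP => w0; move: w1; rewrite w0 /qf !mul0mx mxE => /eqP.
  by rewrite eq_sym oner_eq0.
have [k wk] : exists k, 0 < w 0 k.
  have /existsP [k wk] : [exists k, w 0 k != 0].
    apply: contraNT wn0 => /existsPn H; apply/eqP/rowP => k; rewrite mxE.
    by move: (H k); rewrite negbK => /eqP.
  by exists k; rewrite lt_neqAle eq_sym wk wge0.
have Sk : 0 < S k s0 by rewrite -Ssym mxE.
have sum_ge : forall i j, w 0 j * S j i <= \sum_l w 0 l * S l i.
  move=> i j; rewrite (bigD1 j) //= lerDl; apply: sumr_ge0 => l _.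
  exact: mulr_ge0.
have Ms0 : 0 < Mx * w 0 s0.
  by rewrite weigi; apply: lt_le_trans (sum_ge s0 k); apply: mulr_gt0.
have ws0ge := wge0 s0.
have Mpos : 0 < Mx by nra.
have ws0 : 0 < w 0 s0 by nra.
exists Mx, w; split; first by apply/eigenvalueP; exists w.
split.
  move=> mu' /eigenvalueP [v vS vn0].
  have e : qf S v v = mu' * qf 1 v v by rewrite /qf vS mulmx1 -scalemxAl mxE.
  have := C1 v; rewrite e; rewrite ler_pM2r //; exact: nn_gt0.
split => //; split => //.
move=> i; have := weigi i; have := sum_ge i s0; have := Spos i => ? ? ?.
have : 0 < Mx * w 0 i by nra.
by rewrite (pmulr_rgt0 _ Mpos).
Qed.

Section Zpart.
Variables (R : realType) (n : nat) (SN : {set 'I_n})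
  (r : 'I_n -> R) (lambda : R) (P : 'M[R]_n) (s0 : 'I_n).
Hypotheses (rneg : forall s, s \in SN -> r s < 0) (lpos : 0 < lambda)
  (Pge0 : forall i j, 0 <= P i j) (Psum : forall i, i \in SN -> \sum_j P i j = 1)
  (Pnt : forall i j, i \notin SN -> P i j = 0).

Let d i := expR (- r i / lambda).
Let M := diag_mx (\row_i d i) - P.

Lemma d_gt0 i : 0 < d i. Proof. exact: expR_gt0. Qed.

Lemma Mrow (x : 'I_n -> R) i : \sum_j M i j * x j = d i * x i - \sum_j P i j * x j.
Proof.
rewrite /M; under eq_bigr do rewrite !mxE mulrBl.
rewrite sumrB; congr (_ - _).
rewrite (bigD1 i) //= eqxx mulr1n big1 ?addr0 // => j /negPf ji.
by rewrite eq_sym ji mulr0n mul0r.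
Qed.

Lemma Mcol (x : 'I_n -> R) j : \sum_i x i * M i j = x j * d j - \sum_i x i * P i j.
Proof.
rewrite /M; under eq_bigr do rewrite !mxE mulrBr.
rewrite sumrB; congr (_ - _).
rewrite (bigD1 j) //= eqxx mulr1n big1 ?addr0 // => i /negPf ji.
by rewrite ji mulr0n mulr0.
Qed.

Lemma maxprin (x : 'I_n -> R) :
  (forall i, 0 <= \sum_j M i j * x j) -> forall i, 0 <= x i.
Proof.
move=> H.
have [i _ Hmin] := @real_arg_minP R _ s0 predT x isT (fun i _ => num_real (x i)).
move=> k; apply: le_trans (Hmin k isT); rewrite leNgt; apply/negP => xi.
have := H i; rewrite Mrow.
case: (boolP (i \in SN)) => iS.
  have dgt1 : 1 < d i by rewrite /d expR_gt1 divr_gt0 // oppr_gt0 rneg.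
  have : \sum_j P i j * x i <= \sum_j P i j * x j.
    by apply: ler_sum => j _; apply: ler_wpM2l => //; exact: Hmin.
  rewrite -mulr_suml Psum // mul1r => Hs Hd.
  nra.
rewrite big1 => [|j _]; last by rewrite Pnt // mul0r.
rewrite subr0 => Hd.
have := d_gt0 i; nra.
Qed.

Lemma M_unit : M \in unitmx.
Proof.
rewrite unitmxE unitfE -det_tr; apply/negP => /det0P [v vn0 vM].
have H0 : forall i, \sum_j M i j * v 0 j = 0.
  move=> i; move: (congr1 (fun m : 'rV[R]_n => m 0 i) vM); rewrite !mxE => E.
  rewrite -[RHS]E; apply: eq_bigr => j _; rewrite [M^T j i]mxE; exact: mulrC.
have p1 : forall i, 0 <= v 0 i by apply: (maxprin (fun j => v 0 j)) => i; rewrite H0.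
have p2 : forall i, 0 <= - v 0 i.
  apply: (maxprin (fun j => - v 0 j)) => i; rewrite (eq_bigr (fun j => - (M i j * v 0 j))) ?sumrN ?H0 ?oppr0 //.
  by move=> j _; rewrite mulrN.
move/eqP: vn0; apply; apply/rowP => i; rewrite mxE.
by apply/eqP; rewrite eq_le -oppr_ge0 p1 p2.
Qed.

Lemma Z_ge0 i j : 0 <= (invmx M) i j.
Proof.
have MZ := mulmxV M_unit.
apply: (maxprin (fun k => invmx M k j)) => i'.
have := congr1 (fun m : 'M[R]_n => m i' j) MZ; rewrite mxE => ->.
by rewrite mxE ler0n.
Qed.

Lemma Z_path k (u : nat -> 'I_n) : u 0%N = s0 ->
  0 < \prod_(t < k) P (u t) (u t.+1) -> 0 < invmx M s0 (u k).
Proof.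
pose z k := invmx M s0 k.
have zeq : forall j, z j * d j = (s0 == j)%:R + \sum_k z k * P k j.
  move=> j; apply/eqP; rewrite -subr_eq -(Mcol z).
  have := congr1 (fun m : 'M[R]_n => m s0 j) (mulVmx M_unit); rewrite mxE => ->.
  by rewrite mxE.
have sumge : forall i j, z i * P i j <= \sum_k z k * P k j.
  move=> i j; rewrite (bigD1 i) //= lerDl; apply: sumr_ge0 => l _.
  by apply: mulr_ge0; [exact: Z_ge0 | exact: Pge0].
elim: k u => [|k IH] u u0 Hp.
  rewrite u0; have := zeq s0; rewrite eqxx => E.
  have : 0 < z s0 * d s0.
    rewrite E; apply: (lt_le_trans ltr01); rewrite lerDl.
    by apply: sumr_ge0 => l _; apply: mulr_ge0; [exact: Z_ge0 | exact: Pge0].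
  by rewrite (pmulr_lgt0 _ (d_gt0 s0)).
rewrite big_ord_recr /= in Hp.
set A := \prod_(t < k) _ in Hp.
have A0 : 0 <= A by apply: prodr_ge0 => t _; exact: Pge0.
have B0 := Pge0 (u k) (u k.+1).
have Apos : 0 < A by nra.
have Bpos : 0 < P (u k) (u k.+1) by nra.
have zk := IH u u0 Apos.
have := zeq (u k.+1) => E.
have : 0 < z (u k.+1) * d (u k.+1).
  rewrite E; apply: ltr_wpDl; first exact: ler0n.
  apply: lt_le_trans (sumge (u k) _); exact: mulr_gt0.
by rewrite (pmulr_lgt0 _ (d_gt0 _)).
Qed.
End Zpart.

Theorem propositionC2 (R : realType) (n : nat) (SN : {set 'I_n})
  (r : 'I_n -> R) (lambda : R) (P : 'M[R]_n) (s0 : 'I_n) :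
  (forall s, s \in SN -> r s < 0) ->
  0 < lambda ->
  (forall i j, 0 <= P i j) ->
  (forall i, i \in SN -> \sum_j P i j = 1) ->
  (forall i j, i \notin SN -> P i j = 0) ->
  (forall s, reachable P s0 s) ->
  exists (mu : R) (v : 'rV[R]_n),
    eigenvalue (symm_part (default_rep r lambda P)) mu /\
    (forall mu', eigenvalue (symm_part (default_rep r lambda P)) mu' -> mu' <= mu) /\
    0 < mu /\
    v *m symm_part (default_rep r lambda P) = mu *: v /\
    (forall i, 0 < v 0 i).
Proof.
move=> rneg lpos Pge0 Psum Pnt reach.
have Zge0 : forall i j, 0 <= default_rep r lambda P i j :=
  @Z_ge0 R n SN r lambda P s0 rneg lpos Pge0 Psum Pnt.
have Zpos : forall j, 0 < default_rep r lambda P s0 j.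
  move=> j; have [k [u [u0 [uk Hp]]]] := reach j; rewrite -uk.
  exact: (@Z_path R n SN r lambda P s0 rneg lpos Pge0 Psum Pnt k u u0 Hp).
move: Zge0 Zpos; set Z := default_rep r lambda P => Zge0 Zpos.
apply: (@PF R n (symm_part Z) s0).
- by apply/matrixP => i j; rewrite !mxE addrC.
- move=> i j; rewrite !mxE; apply: mulr_ge0; first by rewrite invr_ge0 ler0n.
  exact: addr_ge0.
- move=> i; rewrite !mxE; apply: mulr_gt0; first by rewrite invr_gt0 ltr0n.
  have := Zpos i; have := Zge0 i s0; lra.
Qed.
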